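(* Let $(K,\delta)$ be a differential field of characteristic zero and $x\in K$ with $\delta(x)=1$, and let $f\in K$. (i) Let $n$ be a positive integer. Then $f=\delta^n(g)$ for some $g\in K$ if and only if for every $i$ with $0\le i\le n-1$ there exists $h_i\in K$ with $x^if=\delta(h_i)$. (ii) $f$ is stable in $(K,\delta)$ if and only if for every $i\in\mathbb{N}$ there exists $g_i\in K$ with $x^if=\delta(g_i)$.
   Context: A differential field $(K,\delta)$ is a field with an additive map $\delta$ satisfying $\delta(fg)=f\delta(g)+g\delta(f)$. An element $f\in K$ is stable in $(K,\delta)$ if there is a sequence $(a_i)_{i\ge0}$ in $K$ with $a_0=f$ and $\delta(a_{i+1})=a_i$ for all $i\in\mathbb{N}$. *)

(* Defs.v *)
From mathcomp Require Import all_boot all_order all_algebra.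
Set Implicit Arguments. Unset Strict Implicit. Unset Printing Implicit Defensive.
Import GRing.Theory.
Local Open Scope ring_scope.

Definition is_derivation (K : fieldType) (delta : K -> K) : Prop :=
  (forall f g : K, delta (f + g) = delta f + delta g) /\
  (forall f g : K, delta (f * g) = f * delta g + g * delta f).

Definition stable (K : fieldType) (delta : K -> K) (f : K) : Prop :=
  exists a : nat -> K, a 0%N = f /\ forall i : nat, delta (a i.+1) = a i.

(* Main.v *)
Require Import Defs.
From mathcomp Require Import all_boot all_order all_algebra.
From mathcomp Require Import ring.
From Stdlib Require Import ClassicalEpsilon.
Local Open Scope ring_scope.
Import GRing.Theory.

Section Aux.
Variables (K : fieldType) (delta : K -> K).
Hypothesis hdelta : is_derivation delta.
Hypothesis hchar : [pchar K] =i pred0.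
Variable x : K.
Hypothesis hx : delta x = 1.

Let dD : forall a b, delta (a + b) = delta a + delta b := proj1 hdelta.
Let dM : forall a b, delta (a * b) = a * delta b + b * delta a := proj2 hdelta.

Lemma d0 : delta 0 = 0.
Proof. by apply/(addrI (delta 0)); rewrite -dD !addr0. Qed.

Lemma dN a : delta (- a) = - delta a.
Proof. by apply/(addrI (delta a)); rewrite -dD !subrr d0. Qed.

Lemma dB a b : delta (a - b) = delta a - delta b.
Proof. by rewrite dD dN. Qed.

Lemma d1 : delta 1 = 0.
Proof. apply/(addrI (delta 1)); rewrite addr0.
by rewrite -{1 2}(mul1r (delta 1)) -dM mulr1. Qed.

Lemma dn n : delta n%:R = 0.
Proof. elim: n => [|n IH]; first by rewrite d0.
by rewrite mulrS dD d1 IH addr0. Qed.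

Lemma nz n : (n.+1)%:R != 0 :> K.
Proof. have /pcharf0P H := hchar. by rewrite H. Qed.

Lemma dinvn n : delta (n.+1%:R)^-1 = 0.
Proof. have := dM (n.+1%:R) (n.+1%:R)^-1.
rewrite mulfV ?nz // d1 dn mulr0 addr0 => /esym /eqP.
by rewrite mulf_eq0 (negbTE (nz n)) /= => /eqP. Qed.

Lemma dcM c a : delta c = 0 -> delta (c * a) = c * delta a.
Proof. by move=> hc; rewrite dM hc mulr0 addr0. Qed.

Lemma dX i : delta (x ^+ i.+1) = i.+1%:R * x ^+ i.
Proof. elim: i => [|i IH]; first by rewrite expr1 hx expr0 mulr1.
rewrite exprS dM IH hx mulr1 (mulrS _ i.+1) exprS; ring. Qed.

Lemma kb f h i H : delta h = f -> x ^+ i.+1 * f = delta H ->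
  x ^+ i * h = delta ((i.+1%:R)^-1 * (x ^+ i.+1 * h - H)).
Proof.
move=> hh hH; rewrite dcM ?dinvn // dB dM dX hh -hH.
rewrite [X in _ * (X - _)]addrC addrK.
by rewrite mulrCA mulKf ?nz // mulrC.
Qed.

Lemma kf f F i H : delta F = f -> x ^+ i * F = delta H ->
  x ^+ i.+1 * f = delta (x ^+ i.+1 * F - i.+1%:R * H).
Proof.
move=> hF hH; rewrite dB dM dX hF dcM ?dn // -hH; ring.
Qed.

Lemma fwd n g : forall i, (i < n)%N -> exists h, x ^+ i * iter n delta g = delta h.
Proof.
elim: n => [//|n IH] [|i] Hi /=.
  by exists (iter n delta g); rewrite expr0 mul1r.
have [H hH] := IH i Hi.
by exists (x ^+ i.+1 * iter n delta g - i.+1%:R * H); apply: kf.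
Qed.

Lemma bwd n : forall f, (forall i, (i < n.+1)%N -> exists h, x ^+ i * f = delta h) ->
  exists g, f = iter n.+1 delta g.
Proof.
elim: n => [|n IH] f Hf.
  have [h hh] := Hf 0%N isT; exists h; by rewrite /= -hh expr0 mul1r.
have [h hh] := Hf 0%N isT. rewrite expr0 mul1r in hh.
have [g hg] : exists g, h = iter n.+1 delta g.
  apply: IH => i Hi. have [H hH] := Hf i.+1 Hi.
  by eexists; apply: kb (esym hh) hH.
by exists g; rewrite iterS -hg.
Qed.

Definition S f := forall i : nat, exists g : K, x ^+ i * f = delta g.

Lemma Sstep f : S f -> exists h, delta h = f /\ S h.
Proof.
move=> Hf; have [h hh] := Hf 0%N; rewrite expr0 mul1r in hh.
exists h; split => // i; have [H hH] := Hf i.+1.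
by eexists; apply: kb (esym hh) hH.
Qed.

End Aux.

Theorem lemma2p10 (K : fieldType) (delta : K -> K)
  (hdelta : is_derivation delta)
  (hchar : [pchar K] =i pred0)
  (x : K) (hx : delta x = 1) (f : K) :
  (forall n : nat, (0 < n)%N ->
     ((exists g : K, f = iter n delta g) <->
      (forall i : nat, (i < n)%N -> exists h : K, x ^+ i * f = delta h)))
  /\
  (stable delta f <-> (forall i : nat, exists g : K, x ^+ i * f = delta g)).
Proof.
split.
  move=> [//|n] _; split.
    by move=> [g ->]; apply: fwd.
  exact: bwd.
split.
  move=> [a [a0 ha]] i.
  have -> : f = iter i.+1 delta (a i.+1).
    rewrite -a0; elim: i => [|i IH]; first by rewrite /= ha.
    by rewrite IH [in RHS]iterSr ha.
  by apply: fwd.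
move=> Hf.
have step : forall y : {y : K | S K delta x y}, {z : {z : K | S K delta x z} | delta (proj1_sig z) = proj1_sig y}.
  move=> [y Hy]; have /constructive_indefinite_description [z [hz Sz]] :=
    @Sstep K delta hdelta hchar x hx y Hy.
  by exists (exist _ z Sz).
pose a n := proj1_sig (iter n (fun y => proj1_sig (step y)) (exist _ f Hf)).
exists a; split => // i.
by rewrite /a iterS (proj2_sig (step _)).
Qed.
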